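(* Let $G$ be a finite simple graph, let $I$ be a maximum critical independent set in $G$, and let $X=I\cup N(I)$. Then $\operatorname{diadem}(G)\cup N(\operatorname{diadem}(G)) = X$.
   Context: For $Y\subseteq V(G)$, $N(Y)$ is the set of vertices adjacent to some vertex of $Y$, and $d(Y)=|Y|-|N(Y)|$. An independent set $S$ is critical if $d(S)=\max\{d(Y):Y\subseteq V(G)\}$; the empty set may be critical. A maximum critical independent set is a critical independent set of maximum cardinality. $\operatorname{diadem}(G)$ is the union of all maximum critical independent sets of $G$. *)

(* Defs.v *)
From mathcomp Require Import all_boot all_order all_algebra.
Set Implicit Arguments. Unset Strict Implicit. Unset Printing Implicit Defensive.
Import GRing.Theory Num.Theory.
Local Open Scope ring_scope.

Definition simple_graph (T : finType) (e : rel T) : Prop :=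
  symmetric e /\ irreflexive e.

Section Defs.
Variables (T : finType) (e : rel T).

Definition nbhd (Y : {set T}) : {set T} :=
  [set v | [exists u in Y, e u v]].

Definition dif (Y : {set T}) : int := (#|Y|%:Z - #|nbhd Y|%:Z)%R.

Definition independent (S : {set T}) : bool :=
  [forall u in S, forall v in S, ~~ e u v].

Definition critical (S : {set T}) : bool :=
  [forall Y : {set T}, dif Y <= dif S].

Definition critical_independent (S : {set T}) : bool :=
  independent S && critical S.

Definition max_critical_independent (S : {set T}) : bool :=
  critical_independent S &&
  [forall S' : {set T}, critical_independent S' ==> (#|S'| <= #|S|)%N].

Definition diadem : {set T} :=
  \bigcup_(S : {set T} | max_critical_independent S) S.

End Defs.

(* Main.v *)
Require Import Defs.
From mathcomp Require Import all_boot all_order all_algebra.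
From mathcomp Require Import zify.
Set Implicit Arguments. Unset Strict Implicit. Unset Printing Implicit Defensive.

Section L.
Variables (T : finType) (e : rel T).
Hypothesis esym : symmetric e.

Lemma nbhdP (A : {set T}) v : reflect (exists2 u, u \in A & e u v) (v \in nbhd e A).
Proof. rewrite inE; apply: (iffP existsP) => [[u /andP[]]|[u ? ?]]; [by exists u|].
by exists u; apply/andP. Qed.

Lemma nbhdU (A B : {set T}) : nbhd e (A :|: B) = nbhd e A :|: nbhd e B.
Proof.
apply/setP=> v; rewrite [in RHS]inE; apply/nbhdP/orP.
  by case=> u; rewrite inE => /orP[] ? ?; [left|right]; apply/nbhdP; exists u.
by case=> /nbhdP[u ? ?]; exists u; rewrite // inE; apply/orP; [left|right].
Qed.

Lemma nbhdS (A B : {set T}) : A \subset B -> nbhd e A \subset nbhd e B.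
Proof. move=> /subsetP sAB; apply/subsetP=> v /nbhdP[u ? ?]; apply/nbhdP; exists u => //; exact: sAB. Qed.

Lemma supermod (A B : {set T}) : (dif e A + dif e B <= dif e (A :|: B) + dif e (A :&: B))%R.
Proof.
rewrite /dif nbhdU.
have h1 := cardsUI A B. have h2 := cardsUI (nbhd e A) (nbhd e B).
have h3 : #|nbhd e (A :&: B)| <= #|nbhd e A :&: nbhd e B|.
  by apply: subset_leq_card; rewrite subsetI !nbhdS ?subsetIl ?subsetIr.
lia.
Qed.

Lemma critP (A : {set T}) : reflect (forall Y, (dif e Y <= dif e A)%R) (critical e A).
Proof. exact: forallP. Qed.

Lemma critU (A B : {set T}) : critical e A -> critical e B -> critical e (A :|: B).
Proof.
move=> /critP cA /critP cB; apply/critP=> Y.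
have := supermod A B; have := cB (A :&: B); have := cA Y; lia.
Qed.

Lemma critI (A B : {set T}) : critical e A -> critical e B -> critical e (A :&: B).
Proof.
move=> /critP cA /critP cB; apply/critP=> Y.
have := supermod A B; have := cA (A :|: B); have := cB Y; lia.
Qed.

Lemma indepP (S : {set T}) :
  reflect (forall u v, u \in S -> v \in S -> ~~ e u v) (independent e S).
Proof.
apply: (iffP forallP) => [h u v uS vS|h u].
  by move: (h u); rewrite uS /= => /forallP /(_ v); rewrite vS.
by apply/implyP=> uS; apply/forallP=> v; apply/implyP=> vS; apply: h.
Qed.

Lemma core_ci (Y : {set T}) : critical e Y -> critical_independent e (Y :\: nbhd e Y).
Proof.
move=> /critP cY; apply/andP; split.
  apply/indepP=> u v; rewrite !in_setD => /andP[uN _] /andP[vN vY]; apply/negP=> euv.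
  by move/negP: uN; apply; apply/nbhdP; exists v => //; rewrite esym.
apply/critP=> Z; apply: (@Order.POrderTheory.le_trans _ _ (dif e Y)); first exact: cY.
rewrite /dif.
have h1 : nbhd e (Y :\: nbhd e Y) \subset nbhd e Y :\: Y.
  apply/subsetP=> v /nbhdP[u]; rewrite !in_setD => /andP[uN uY] euv.
  rewrite andbC; apply/andP; split; first by apply/nbhdP; exists u.
  by apply/negP=> vY; move/negP: uN; apply; apply/nbhdP; exists v; rewrite // esym.
have h2 := subset_leq_card h1.
have h3 := cardsD Y (nbhd e Y). have h4 := cardsD (nbhd e Y) Y.
rewrite setIC in h4.
have h5 : #|Y :&: nbhd e Y| <= #|Y| by apply: subset_leq_card; apply: subsetIl.
have h6 : #|Y :&: nbhd e Y| <= #|nbhd e Y| by apply: subset_leq_card; apply: subsetIr.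
lia.
Qed.

Lemma maxciP (I : {set T}) : max_critical_independent e I ->
  critical_independent e I /\ forall S, critical_independent e S -> #|S| <= #|I|.
Proof.
move=> /andP[ci /forallP h]; split => // S cS; exact: (implyP (h S) cS).
Qed.

Lemma J_sub (I J : {set T}) : max_critical_independent e I ->
  max_critical_independent e J -> J \subset I :|: nbhd e I.
Proof.
move=> /maxciP[/andP[iI cI] mI] /maxciP[/andP[iJ cJ] _].
set U := I :|: J.
have cU : critical e U by apply: critU.
have /andP[iU0 cU0] := core_ci cU.
set U0 := U :\: nbhd e U in iU0 cU0.
have NIU : nbhd e I \subset nbhd e U by apply: nbhdS; apply: subsetUl.
have ciK : critical_independent e (I :|: U0).
  apply/andP; split; last exact: critU.
  apply/indepP=> u v; rewrite !in_setU => /orP[uI|uU0] /orP[vI|vU0].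
  - exact: (indepP _ iI).
  - apply/negP=> euv; move: vU0; rewrite in_setD => /andP[/negP vN _]; apply: vN.
    by apply: (subsetP NIU); apply/nbhdP; exists u.
  - apply/negP=> euv; move: uU0; rewrite in_setD => /andP[/negP uN _]; apply: uN.
    by apply: (subsetP NIU); apply/nbhdP; exists v; rewrite // esym.
  - exact: (indepP _ iU0).
have hK := mI _ ciK.
have sU0 : U0 \subset I.
  have h1 := subset_leq_card (subsetUl I U0).
  have e1 : #|I| = #|I :|: U0| by lia.
  have := subset_cardP e1 (subsetUl I U0) => eIU.
  by apply/subsetP=> x xU; rewrite eIU in_setU xU orbT.
apply/subsetP=> j jJ; rewrite in_setU; apply/orP; case: (boolP (j \in nbhd e I)) => jN; [by right|left].
rewrite (subsetP sU0) //; rewrite in_setD in_setU jJ orbT andbT; apply/negP => /nbhdP[u].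
rewrite inE => /orP[uI|uJ] euj.
  by move/negP: jN; apply; apply/nbhdP; exists u.
by move/negP: (indepP _ iJ u j uJ jJ).
Qed.

Lemma X_sub (I J : {set T}) : max_critical_independent e I ->
  max_critical_independent e J -> I :|: nbhd e I \subset J :|: nbhd e J.
Proof.
move=> mI mJ.
have sJ := J_sub mI mJ. have sI := J_sub mJ mI.
move: (mI) (mJ) => /maxciP[/andP[iI cI] hI] /maxciP[/andP[iJ cJ] hJ].
have eIJ : #|I| = #|J|.
  by have := hI _ (introT andP (conj iJ cJ)); have := hJ _ (introT andP (conj iI cI)); lia.
have cP := critI cI cJ.
have dP : dif e I = dif e (I :&: J).
  by move/critP: cP => /(_ I); move/critP: cI => /(_ (I :&: J)); lia.
move: dP; rewrite /dif => dP.
set A := J :&: nbhd e I.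
have sA : A \subset nbhd e I :\: nbhd e J.
  apply/subsetP=> v; rewrite in_setI => /andP[vJ vN]; rewrite in_setD vN andbT.
  apply/negP=> /nbhdP[u uJ euv]; by move/negP: (indepP _ iJ u v uJ vJ).
have h1 := cardsD (nbhd e I) (nbhd e J).
have h2 : #|nbhd e (I :&: J)| <= #|nbhd e I :&: nbhd e J|.
  by apply: subset_leq_card; rewrite subsetI !nbhdS ?subsetIl ?subsetIr.
have h3 := cardsD J I. rewrite setIC in h3.
have h4 : J :\: I \subset A.
  apply/subsetP=> v; rewrite in_setD => /andP[vI vJ]; rewrite in_setI vJ /=.
  by move: (subsetP sJ v vJ); rewrite in_setU (negbTE vI).
have h5 := subset_leq_card h4. have h6 := subset_leq_card sA.
have h7 := subset_leq_card (subsetIl I J).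
have eA : #|A| = #|nbhd e I :\: nbhd e J| by lia.
have := subset_cardP eA sA => eqA.
apply/subsetP=> v; rewrite in_setU => /orP[vI|vN].
  exact: (subsetP sI).
rewrite in_setU; apply/orP; case: (boolP (v \in nbhd e J)) => vNJ; [by right|left].
have : v \in nbhd e I :\: nbhd e J by rewrite in_setD vN vNJ.
by rewrite -eqA in_setI => /andP[].
Qed.
End L.

Theorem lemma2p1 (T : finType) (e : rel T) (I : {set T}) :
  simple_graph e ->
  max_critical_independent e I ->
  diadem e :|: nbhd e (diadem e) = I :|: nbhd e I.
Proof.
move=> [esym _] mI.
have DI : I \subset diadem e by apply: (bigcup_sup I).
apply/eqP; rewrite eqEsubset; apply/andP; split; last first.
  by rewrite setUSS // nbhdS.
apply/subsetP=> v; rewrite in_setU => /orP[/bigcupP[J mJ vJ]|/nbhdP[u /bigcupP[J mJ uJ] euv]].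
  by apply: (subsetP (X_sub esym mJ mI)); rewrite in_setU vJ.
apply: (subsetP (X_sub esym mJ mI)); rewrite in_setU; apply/orP; right.
by apply/nbhdP; exists u.
Qed.
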